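(* Let $\lambda$ be a partition with $|\lambda| = k$. Then for all $n \in \mathbb{N}$ (with $\mathbb{N}=\{0,1,2,\dots\}$), \[ \frac{1}{\# \mathcal{OT}(\lambda,k+2n)} \sum_{T \in \mathcal{OT}(\lambda,k+2n)} \mathrm{wt}(T) = \frac{1}{6}\left(4n^2 + 3k^2 + 8 kn + 2n +3k\right).\]
   Context: Young's lattice is the poset of all integer partitions ordered by inclusion of Young diagrams; write $\mu \lessdot \lambda$ if the Young diagram of $\lambda$ is obtained from that of $\mu$ by adding one box. $|\lambda|$ denotes the size (number of boxes) of $\lambda$. A walk in Young's lattice is a sequence of partitions $(\lambda^{0},\lambda^{1},\ldots,\lambda^{l})$ such that for each $1\le i\le l$ either $\lambda^{i-1}\lessdot\lambda^{i}$ or $\lambda^{i}\lessdot\lambda^{i-1}$. An oscillating tableau of shape $\lambda$ and length $l$ is such a walk with $\lambda^{0}=\emptyset$ (the empty partition) and $\lambda^{l}=\lambda$; $\mathcal{OT}(\lambda,l)$ denotes the set of all of them. The weight of $T=(\lambda^{0},\ldots,\lambda^{l})$ is $\mathrm{wt}(T) := \sum_{i=0}^{l}|\lambda^{i}|$. (The set $\mathcal{OT}(\lambda,k+2n)$ is nonempty for all $n\in\mathbb{N}$.) *)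

(* Defs.v *)
From mathcomp Require Import all_boot all_order all_algebra.
Set Implicit Arguments. Unset Strict Implicit. Unset Printing Implicit Defensive.

Definition is_partition (p : seq nat) : Prop :=
  sorted geq p /\ all (fun x => 0 < x) p.

Definition psize (p : seq nat) : nat := sumn p.

Definition covers (mu lam : seq nat) : Prop :=
  is_partition mu /\ is_partition lam /\ exists i, lam = incr_nth mu i.

Definition is_osc_tableau (lam : seq nat) (l : nat) (T : seq (seq nat)) : Prop :=
  size T = l.+1 /\ nth [::] T 0 = [::] /\ nth [::] T l = lam /\
  (forall i, i < size T -> is_partition (nth [::] T i)) /\
  (forall i, 0 < i <= l ->
     covers (nth [::] T i.-1) (nth [::] T i) \/ covers (nth [::] T i) (nth [::] T i.-1)).

Definition wt (T : seq (seq nat)) : nat := \sum_(p <- T) psize p.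

(* Main.v *)
Require Import Defs.
From mathcomp Require Import all_boot all_order all_algebra.
Import GRing.Theory Num.Theory.
Local Open Scope ring_scope.
From mathcomp Require Import zify.
Set Implicit Arguments. Unset Strict Implicit. Unset Printing Implicit Defensive.

Section Helpers.
Local Open Scope nat_scope.

Definition partb (p : seq nat) := sorted geq p && all (fun x => 0 < x) p.

Lemma is_partitionP p : is_partition p <-> partb p.
Proof. by rewrite /is_partition /partb; split => [[-> ->]|/andP]. Qed.

Lemma partbP p : reflect ((forall i, nth 0 p i.+1 <= nth 0 p i) /\
                          (forall i, i < size p -> 0 < nth 0 p i)) (partb p).
Proof.
apply: (iffP andP) => [[/sortedP Hs /all_nthP Ha]|[Hm Hp]]; split.
- move=> i; case: (ltnP i.+1 (size p)) => H; first exact: (Hs 0 i H).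
  by rewrite nth_default.
- by move=> i Hi; apply: Ha.
- by apply/(sortedP 0) => i Hi; apply: Hm.
- by apply/(all_nthP 0) => i Hi; apply: Hp.
Qed.

Lemma mono_le (p : seq nat) : (forall i, nth 0 p i.+1 <= nth 0 p i) ->
  forall i x, i <= x -> nth 0 p x <= nth 0 p i.
Proof.
move=> Hm i x /subnK <-; elim: (x - i) => [//|d IH].
by rewrite addSn; apply: leq_trans (Hm _) IH.
Qed.

Lemma pos_ext (a b : seq nat) : all (fun x => 0 < x) a -> all (fun x => 0 < x) b ->
  (forall i, nth 0 a i = nth 0 b i) -> a = b.
Proof.
move=> /all_nthP Ha /all_nthP Hb He.
have Hs : size a = size b.
  apply/eqP; rewrite eqn_leq; apply/andP; split; rewrite leqNgt; apply/negP => H.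
  - by have := Ha 0 _ H; rewrite He nth_default.
  - by have := Hb 0 _ H; rewrite -He nth_default.
by apply: (eq_from_nth (x0 := 0)) => // i _.
Qed.

Lemma part_ext (a b : seq nat) : partb a -> partb b ->
  (forall i, nth 0 a i = nth 0 b i) -> a = b.
Proof. by move=> /andP[_ Ha] /andP[_ Hb]; apply: pos_ext. Qed.

Lemma partb_pos p i : partb p -> (0 < nth 0 p i) = (i < size p).
Proof.
move=> /partbP[_ Hp]; case: (ltnP i (size p)) => H; first by apply: Hp.
by rewrite nth_default.
Qed.

Lemma incr_pos (d : seq nat) j : all (fun x => 0 < x) d -> j <= size d ->
  all (fun x => 0 < x) (incr_nth d j).
Proof.
move=> /all_nthP Ha Hj; apply/(all_nthP 0) => i.
rewrite size_incr_nth nth_incr_nth.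
case: (ltnP j (size d)) => Hjs Hi.
  by have := Ha 0 i Hi; lia.
have -> : j = size d by apply/eqP; rewrite eqn_leq Hj.
case: (i =P size d) => [->|Hne]; first by rewrite eqxx.
have Hi2 : i < size d by lia.
by have := Ha 0 i Hi2; lia.
Qed.

Lemma incr_partb m i : partb m -> i <= size m ->
  (0 < i -> nth 0 m i < nth 0 m i.-1) -> partb (incr_nth m i).
Proof.
move=> Hm Hi Hlt; apply/andP; split; last by apply: incr_pos => //; case/andP: Hm.
apply/(sortedP 0) => x _ /=; rewrite !nth_incr_nth.
case/partbP: Hm => Hmon _; have := Hmon x.
case: (i =P x.+1) => [Ex|_]; first by move: Hlt; rewrite Ex /=; case: (x.+1 == x) => /=; lia.
by case: (i == x) => /=; lia.
Qed.

Lemma incr_partb_inv m i x : partb (incr_nth m i) -> i = x.+1 -> nth 0 m i < nth 0 m x.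
Proof.
case/partbP => Hmon _ Ei; have := Hmon x; rewrite !nth_incr_nth -Ei eqxx.
by have -> : (i == x) = false by apply/eqP; lia.
Qed.

Lemma incr_partb_size m i : partb m -> partb (incr_nth m i) -> i <= size m.
Proof.
move=> Hm Hi; rewrite leqNgt; apply/negP => Hlt.
case: i Hi Hlt => [//|x] Hi Hlt.
have := incr_partb_inv Hi (erefl _).
by rewrite (nth_default 0 (ltnW Hlt)) nth_default.
Qed.

Definition decr (m : seq nat) j :=
  if nth 0 m j == 1 then take j m else set_nth 0 m j (nth 0 m j).-1.

Lemma decr_nth m j x : partb m -> nth 0 m j.+1 < nth 0 m j ->
  nth 0 (decr m j) x = nth 0 m x - (j == x).
Proof.
move=> Hm Hlt; rewrite /decr; case: eqP => Hj.
- case: (ltnP x j) => Hx.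
    by rewrite nth_take //; lia.
  rewrite nth_default; last by rewrite size_take; case: (ltnP j (size m)) => H; lia.
  case/partbP: Hm => Hmon _.
  case: (j =P x) => [<-|Hne]; first by rewrite Hj.
  have : nth 0 m x <= nth 0 m j.+1 by apply: mono_le => //; lia.
  lia.
- rewrite nth_set_nth /=; case: (x =P j) => [->|Hne]; first by rewrite eqxx; lia.
  by have : x <> j by []; lia.
Qed.

Lemma decr_spec m j : partb m -> j < size m -> nth 0 m j.+1 < nth 0 m j ->
  partb (decr m j) /\ incr_nth (decr m j) j = m.
Proof.
move=> Hm Hj Hlt.
have Hn := decr_nth _ Hm Hlt.
have Hpos : all (fun x => 0 < x) (decr m j).
  case/andP: Hm => _ Hpos; rewrite /decr; case: eqP => Hj1.
    by apply/allP => x /mem_take; move/allP: Hpos; apply.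
  apply/(all_nthP 0) => i; rewrite size_set_nth nth_set_nth /=.
  case: (i =P j) => [_ _|Hne Hi]; first by move: Hj1 Hlt; lia.
  by move/(all_nthP 0): Hpos; apply; move: Hi; rewrite (maxn_idPr Hj).
split.
- apply/partbP; split => [i|i Hi]; last by move/(all_nthP 0): Hpos; apply.
  rewrite !Hn; case/partbP: Hm => Hmon _; have := Hmon i.
  case: (j =P i.+1) => [<-|_]; case: (j =P i) => [<-|_] /=; lia.
- have Hsz : j <= size (decr m j).
    rewrite /decr; case: eqP => _; last by rewrite size_set_nth; lia.
    by rewrite size_take Hj.
  apply: pos_ext; [exact: incr_pos | by case/andP: Hm|] => x.
  rewrite nth_incr_nth Hn.
  case: (j =P x) => [<-|_] /=; last by rewrite subn0.
  by move: Hlt; lia.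
Qed.

Lemma decr_complete m t j : partb m -> partb t -> incr_nth t j = m -> decr m j = t.
Proof.
move=> Hm Ht Ei.
have Hmj : nth 0 m j = (nth 0 t j).+1 by rewrite -Ei nth_incr_nth eqxx.
have Hj : j < size m by rewrite -(partb_pos _ Hm) Hmj.
have Hlt : nth 0 m j.+1 < nth 0 m j.
  rewrite Hmj -Ei nth_incr_nth (_ : (j == j.+1) = false) ?add0n; last by lia.
  by case/partbP: Ht => Hmon _; rewrite ltnS.
have [Hd E] := decr_spec Hm Hj Hlt.
apply: part_ext => // x.
have := congr1 (fun s => nth 0 s x) (etrans E (esym Ei)).
by rewrite !nth_incr_nth; lia.
Qed.

Lemma sumn_incr v i : sumn (incr_nth v i) = (sumn v).+1.
Proof.
elim: v i => [|a v IH] [|i] //=.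
- by elim: i => //= i ->.
- by rewrite IH addnS.
Qed.

Definition ups (m : seq nat) :=
  [seq incr_nth m i | i <- iota 0 (size m).+1 & partb (incr_nth m i)].

Definition downs (m : seq nat) :=
  [seq decr m j | j <- iota 0 (size m) & partb (decr m j) && (incr_nth (decr m j) j == m)].

Definition nbrs m := ups m ++ downs m.

Lemma mem_upsP m v : partb m ->
  reflect (partb v /\ exists i, v = incr_nth m i) (v \in ups m).
Proof.
move=> Hm; apply: (iffP mapP) => [[i Hi ->]|[Hv [i Ei]]].
  by move: Hi; rewrite mem_filter => /andP[Hp _]; split => //; exists i.
exists i => //; rewrite mem_filter -Ei Hv mem_iota /= add0n ltnS.
by apply: incr_partb_size => //; rewrite -Ei.
Qed.

Lemma mem_downsP m t : partb m ->
  reflect (partb t /\ exists j, m = incr_nth t j) (t \in downs m).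
Proof.
move=> Hm; apply: (iffP mapP) => [[j Hj ->]|[Ht [j Ej]]].
  move: Hj; rewrite mem_filter => /andP[/andP[Hp /eqP E] _].
  by split => //; exists j.
exists j; last by rewrite (decr_complete Hm Ht (esym Ej)).
rewrite mem_filter (decr_complete Hm Ht (esym Ej)) Ht -Ej eqxx /=.
rewrite mem_iota /= add0n -(partb_pos _ Hm) Ej nth_incr_nth eqxx //.
Qed.

Lemma ups_part m v : v \in ups m -> partb v.
Proof. by case/mapP => i; rewrite mem_filter => /andP[H _] ->. Qed.

Lemma downs_part m v : v \in downs m -> partb v.
Proof. by case/mapP => i; rewrite mem_filter => /andP[/andP[H _] _] ->. Qed.

Lemma nbrs_part m v : v \in nbrs m -> partb v.
Proof. by rewrite mem_cat => /orP[/ups_part|/downs_part]. Qed.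

Lemma ups_size m v : v \in ups m -> sumn v = (sumn m).+1.
Proof. by case/mapP => i _ ->; rewrite sumn_incr. Qed.

Lemma downs_size m v : v \in downs m -> sumn m = (sumn v).+1.
Proof.
case/mapP => i; rewrite mem_filter => /andP[/andP[_ /eqP E] _] ->.
by rewrite -{1}E sumn_incr.
Qed.

Lemma ups_uniq m : uniq (ups m).
Proof. by rewrite map_inj_uniq ?filter_uniq ?iota_uniq //; apply: incr_nth_inj. Qed.

Lemma downs_uniq m : uniq (downs m).
Proof.
rewrite map_inj_in_uniq ?filter_uniq ?iota_uniq //.
move=> i j; rewrite !mem_filter => /andP[/andP[_ /eqP Ei] _] /andP[/andP[_ /eqP Ej] _] E.
have := congr1 (fun s => nth 0 s i) (etrans Ei (esym Ej)).
rewrite E !nth_incr_nth eqxx; case: (j =P i) => [->//|_]; lia.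
Qed.

Lemma nbrs_uniq m : uniq (nbrs m).
Proof.
rewrite cat_uniq ups_uniq downs_uniq andbT /=.
apply/hasPn => v /downs_size Hd; apply/negP => /ups_size Hu; lia.
Qed.

Lemma coversP a b : covers a b <-> partb a /\ partb b /\ exists i, b = incr_nth a i.
Proof. by rewrite /covers !is_partitionP. Qed.

Lemma mem_nbrs m v : partb m -> (v \in nbrs m) <-> (covers m v \/ covers v m).
Proof.
move=> Hm; rewrite mem_cat coversP coversP; split.
- case/orP => [/(mem_upsP _ Hm) [Hv Hi]|/(mem_downsP _ Hm) [Hv Hi]].
  + by left.
  + by right.
- case => [[_ [Hv Hi]]|[Hv [_ Hi]]]; apply/orP.
  + by left; apply/mem_upsP.
  + by right; apply/mem_downsP.
Qed.

Lemma nbrs_sym a b : partb a -> partb b -> (b \in nbrs a) = (a \in nbrs b).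
Proof.
move=> Ha Hb; apply/idP/idP => /(mem_nbrs _ _) H.
- by apply/(mem_nbrs _ Hb); case: (H Ha); [right|left].
- by apply/(mem_nbrs _ Ha); case: (H Hb); [right|left].
Qed.

Lemma incr_eq d j b : partb b -> partb d ->
  (forall x, nth 0 b x = nth 0 d x + (j == x)) -> b = incr_nth d j.
Proof.
move=> Hb Hd Hx.
have Hj : j <= size d.
  rewrite leqNgt; apply/negP => Hlt; case: j Hx Hlt => [//|j] Hx Hlt.
  case/partbP: Hb => Hmon _; have := Hmon j; rewrite !Hx !nth_default; try lia.
apply: pos_ext; [by case/andP: Hb | by apply: incr_pos => //; case/andP: Hd|] => x.
by rewrite Hx nth_incr_nth addnC.
Qed.

Lemma R_iff m j : partb m -> j < size m ->
  (partb (decr m j) && (incr_nth (decr m j) j == m)) = (nth 0 m j.+1 < nth 0 m j).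
Proof.
move=> Hm Hj; apply/idP/idP.
- case/andP => Hd /eqP <-; rewrite !nth_incr_nth eqxx.
  case/partbP: Hd => Hmon _; have := Hmon j; case: eqP; lia.
- by move=> Hlt; have [-> ->] := decr_spec Hm Hj Hlt; rewrite eqxx.
Qed.

Lemma A_iff m j : partb m -> j < size m ->
  partb (incr_nth m j.+1) = (nth 0 m j.+1 < nth 0 m j).
Proof.
move=> Hm Hj; apply/idP/idP.
- by move=> H; apply: incr_partb_inv H _.
- by move=> H; apply: incr_partb.
Qed.

Lemma count_one (s : seq nat) (a : pred nat) x : uniq s -> x \in s ->
  (forall y, a y -> y = x) -> a x -> count a s = 1.
Proof.
move=> Hu Hx Hy Ha.
rewrite (eq_in_count (a2 := pred1 x)); first by rewrite count_uniq_mem // Hx.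
move=> y _ /=; apply/idP/eqP => [/Hy //|->//].
Qed.

Lemma count_zero (s : seq nat) (a : pred nat) : (forall y, ~~ a y) -> count a s = 0.
Proof. by move=> H; apply/eqP; rewrite -leqn0 leqNgt -has_count; apply/hasPn => y _; apply: H. Qed.

Lemma count_ups (a : pred (seq nat)) m :
  count a (ups m) = count (fun i => a (incr_nth m i) && partb (incr_nth m i)) (iota 0 (size m).+1).
Proof. by rewrite /ups count_map count_filter. Qed.

Lemma count_downs (a : pred (seq nat)) m :
  count a (downs m) = count (fun j => a (decr m j) &&
     (partb (decr m j) && (incr_nth (decr m j) j == m))) (iota 0 (size m)).
Proof. by rewrite /downs count_map count_filter. Qed.

Lemma key_count m r : partb m ->
  count (fun v => r \in downs v) (ups m)
  = (r == m) + count (fun t => r \in ups t) (downs m).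
Proof.
move=> Hm.
rewrite count_ups count_downs.
set s := size m.
case: (r =P m) => [->|Hne].
- rewrite add1n.
  rewrite [LHS](eq_count (a2 := fun i => partb (incr_nth m i))); last first.
    move=> i /=; case: (boolP (partb (incr_nth m i))) => H; rewrite ?andbF ?andbT //.
    by apply/(mem_downsP _ H); split => //; exists i.
  rewrite [in RHS](eq_count (a2 := fun j => partb (decr m j) && (incr_nth (decr m j) j == m))); last first.
    move=> j /=; case: (boolP (partb (decr m j) && (incr_nth (decr m j) j == m))) => H; rewrite ?andbF ?andbT //.
    case/andP: H => Hd /eqP E.
    by apply/(mem_upsP _ Hd); split => //; exists j.
  rewrite /= (incr_partb Hm) //= add1n; congr S.
  rewrite (iotaDl 1 0) count_map.
  apply: eq_in_count => j; rewrite mem_iota add0n => /andP[_ Hj] /=.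
  by rewrite A_iff // R_iff.
- rewrite add0n.
  pose P1 := fun i => (r \in downs (incr_nth m i)) && partb (incr_nth m i).
  pose P2 := fun j => (r \in ups (decr m j)) && (partb (decr m j) && (incr_nth (decr m j) j == m)).
  change (count P1 (iota 0 s.+1) = count P2 (iota 0 s)).
  pose Phi i j := forall x, nth 0 r x + (j == x) = nth 0 m x + (i == x).
  have F1 : forall i, P1 i -> partb r /\ exists j, Phi i j.
    move=> i /andP[Hr Hi] /=; case/(mem_downsP _ Hi): Hr => Hr [j Ej].
    split => //; exists j => x.
    by have := congr1 (fun s => nth 0 s x) Ej; rewrite !nth_incr_nth /=; lia.
  have F2 : forall j, P2 j -> partb r /\ exists i, Phi i j.
    move=> j /andP[Hr Hj] /=.
    have Hd : partb (decr m j) by case/andP: Hj.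
    have Hjs : j < s.
      rewrite ltnNge; apply/negP => Hge.
      case/andP: Hj => _ /eqP E; have := congr1 (fun s => nth 0 s j) E.
      by rewrite nth_incr_nth eqxx (nth_default 0 Hge).
    have Hlt : nth 0 m j.+1 < nth 0 m j by rewrite -(R_iff Hm Hjs).
    case/(mem_upsP _ Hd): Hr => Hr [i Ei].
    split => //; exists i => x.
    have := congr1 (fun s => nth 0 s x) Ei; rewrite !nth_incr_nth decr_nth //.
    case: (j =P x) => [<-|_] /=; lia.
  have F3 : forall i j, partb r -> Phi i j -> [/\ i != j, i < s.+1, j < s, P1 i & P2 j].
    move=> i j Hr Hp.
    have Hij : i != j.
      apply/eqP => Eij; apply: Hne; apply: part_ext => // x.
      by have := Hp x; rewrite Eij; lia.
    have Hri : nth 0 r i = (nth 0 m i).+1 by have := Hp i; rewrite eqxx; move: Hij; case: eqP; lia.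
    have Hmj : nth 0 m j = (nth 0 r j).+1 by have := Hp j; rewrite eqxx; move: Hij; rewrite eq_sym; case: eqP; lia.
    have Hjs : j < s by rewrite -(partb_pos _ Hm) Hmj.
    have Him : 0 < i -> nth 0 m i < nth 0 m i.-1.
      case: i Hij Hp Hri => [//|i] Hij Hp Hri _ /=.
      case/partbP: Hr => Hmon _; have := Hmon i; have := Hp i; rewrite Hri.
      case: (i.+1 =P i); lia.
    have His : i <= s.
      rewrite leqNgt; apply/negP => Hlt; case: i Hij Hp Hri Him Hlt => [//|i] Hij Hp Hri Him Hlt.
      have := Him isT; rewrite /= (nth_default 0 (n := i)); lia.
    have HA : partb (incr_nth m i) by apply: incr_partb.
    have Hlt : nth 0 m j.+1 < nth 0 m j.
      case/partbP: Hr => Hmon _; have := Hmon j; have := Hp j.+1; rewrite Hmj.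
      case: (j =P j.+1); lia.
    have [Hd Ed] := decr_spec Hm Hjs Hlt.
    split => //.
    + apply/andP; split => //; apply/(mem_downsP _ HA); split => //; exists j.
      apply: incr_eq => // x; rewrite nth_incr_nth; have := Hp x; lia.
    + apply/andP; split; last by rewrite R_iff.
      apply/(mem_upsP _ Hd); split => //; exists i.
      apply: incr_eq => // x; rewrite decr_nth //.
      have := Hp x; case: (j =P x) => [<-|_]; lia.
  case: (boolP (partb r)) => Hr; last first.
    rewrite !count_zero // => y; apply/negP.
    - by move/F2 => [H _]; rewrite H in Hr.
    - by move/F1 => [H _]; rewrite H in Hr.
  case: (boolP [exists i : 'I_s.+1, P1 i]) => [/existsP [i0 Hi0]|Hno].
  + have [_ [j0 Hp0]] := F1 _ Hi0.
    have [Hij Hi Hj HP1 HP2] := F3 _ _ Hr Hp0.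
    have uniqPhi : forall i j, Phi i j -> i = i0 /\ j = j0.
      move=> i j Hp.
      have Ei : i = i0.
        move: Hij; have := Hp i0; have := Hp0 i0; lia.
      split => //; move: Hij; have := Hp j0; have := Hp0 j0; rewrite Ei; lia.
    rewrite (@count_one _ _ i0) ?(@count_one _ _ j0) ?iota_uniq ?mem_iota //.
    * by move=> y /F2 [_ [i Hp]]; have [] := uniqPhi _ _ Hp.
    * by move=> y /F1 [_ [j Hp]]; have [] := uniqPhi _ _ Hp.
  + rewrite count_zero; last first.
      move=> y; apply/negP => /F1 [_ [j Hp]]; have [_ Hy _ HP _] := F3 _ _ Hr Hp.
      by move/existsP: Hno; apply; exists (Ordinal Hy).
    rewrite count_zero // => y; apply/negP => /F2 [_ [i Hp]]; have [_ Hy _ HP _] := F3 _ _ Hr Hp.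
    by move/existsP: Hno; apply; exists (Ordinal Hy).
Qed.

Lemma flat_count (r : seq nat) L (g : seq nat -> seq (seq nat)) :
  (forall v, uniq (g v)) ->
  count_mem r (flatten (map g L)) = count (fun v => r \in g v) L.
Proof.
move=> Hu; rewrite count_flatten -map_comp -sumn_count; congr sumn.
by apply: eq_map => v /=; rewrite count_uniq_mem.
Qed.

Lemma key_perm m : partb m ->
  perm_eq (flatten (map downs (ups m))) (m :: flatten (map ups (downs m))).
Proof.
move=> Hm; apply/allP => r _; apply/eqP.
rewrite /= !flat_count; [|exact: ups_uniq|exact: downs_uniq]. by have := @key_count m r Hm; rewrite eq_sym. 
Qed.

Lemma key_sum m (F : seq nat -> nat) : partb m ->
  \sum_(v <- ups m) \sum_(t <- downs v) F t
  = F m + \sum_(v <- downs m) \sum_(t <- ups v) F t.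
Proof.
move=> Hm.
have E1 : \sum_(v <- ups m) \sum_(t <- downs v) F t = \sum_(t <- flatten (map downs (ups m))) F t.
  by rewrite big_flatten /= big_map.
have E2 : \sum_(v <- downs m) \sum_(t <- ups v) F t = \sum_(t <- flatten (map ups (downs m))) F t.
  by rewrite big_flatten /= big_map.
by rewrite E1 E2 (perm_big _ (key_perm Hm)) big_cons.
Qed.

Fixpoint fF (n : nat) (m : seq nat) : nat :=
  if m is [::] then 1 else
  if n is n'.+1 then \sum_(v <- downs m) fF n' v else 0.

Definition f m := fF (sumn m) m.

Lemma f_nil : f [::] = 1.
Proof. by []. Qed.

Lemma sumn_pos m : partb m -> m != [::] -> 0 < sumn m.
Proof. by case: m => [//|a m] /andP[_ /= /andP[Ha _]] _; lia. Qed.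

Lemma f_downs m : partb m -> m != [::] -> f m = \sum_(v <- downs m) f v.
Proof.
move=> Hm Hne; have Hs := sumn_pos Hm Hne.
rewrite /f; case E: (sumn m) => [|n]; first by rewrite E in Hs.
case: m Hm Hne E Hs => [//|a l] Hm _ E _ /=.
apply: eq_big_seq => v Hv; rewrite /f.
by have := downs_size Hv; rewrite E => -[->].
Qed.

Lemma downs_nonempty m : partb m -> m != [::] -> exists t, t \in downs m.
Proof.
move=> Hm Hne; set j := (size m).-1.
have Hj : j < size m by rewrite /j; case: m Hm Hne {j} => [//|a l] /=.
have Hlt : nth 0 m j.+1 < nth 0 m j.
  rewrite nth_default; last by rewrite /j; case: (size m) Hj => //.
  by rewrite partb_pos.
have [Hd Ed] := decr_spec Hm Hj Hlt.
by exists (decr m j); apply/(mem_downsP _ Hm); split => //; exists j.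
Qed.

Lemma f_pos m : partb m -> 0 < f m.
Proof.
have : forall n m, sumn m < n -> partb m -> 0 < f m; last by move=> H; apply: H (ltnSn _).
elim=> [//|n IH] {}m Hn Hm.
case: (eqVneq m [::]) => [->//|Hne].
have [t Ht] := downs_nonempty Hm Hne.
rewrite f_downs // (big_rem _ Ht) /=.
have := IH t _ (downs_part Ht); have := downs_size Ht; lia.
Qed.

Lemma f_ups m : partb m -> \sum_(v <- ups m) f v = (sumn m).+1 * f m.
Proof.
have : forall n m, sumn m < n -> partb m -> \sum_(v <- ups m) f v = (sumn m).+1 * f m;
  last by move=> H; apply: H (ltnSn _).
elim=> [//|n IH] {}m Hn Hm.
rewrite (eq_big_seq (fun v => \sum_(t <- downs v) f t)); last first.
  move=> v Hv; apply: f_downs; first exact: ups_part Hv.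
  by apply/eqP => E; have := ups_size Hv; rewrite E.
rewrite key_sum //.
rewrite (eq_big_seq (fun v => sumn m * f v)); last first.
  move=> v Hv; have Hs := downs_size Hv.
  rewrite IH ?Hs //; try exact: (downs_part Hv); lia.
rewrite -big_distrr /=.
case: (eqVneq m [::]) => [->|Hne]; first by rewrite big_nil.

by rewrite -f_downs //; lia.
Qed.

Definition nrel (a b : seq nat) := b \in nbrs a.

Fixpoint P (l : nat) : seq (seq (seq nat)) :=
  if l is l'.+1 then [seq rcons p v | p <- P l', v <- nbrs (last [::] p)] else [:: [::]].

Lemma mem_P l p : (p \in P l) = (size p == l) && path nrel [::] p.
Proof.
elim: l p => [|l IH] p.
  by case: p => [|a p]; rewrite /= ?in_cons ?in_nil.
apply/allpairsPdep/idP => [[q [v [Hq Hv ->]]]|].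
  move: Hq; rewrite IH size_rcons rcons_path => /andP[/eqP -> ->] /=.
  by rewrite eqxx.
case/lastP: p => [//|q v]; rewrite size_rcons rcons_path eqSS => /andP[Hs /andP[Hp Hv]].
by exists q, v; split => //; rewrite IH Hs.
Qed.

Lemma uniq_rcons_pairs (s : seq (seq (seq nat))) (t : seq (seq nat) -> seq (seq nat)) :
  uniq s -> (forall x, uniq (t x)) -> uniq [seq rcons x y | x <- s, y <- t x].
Proof.
move=> Hs Ht; elim: s Hs => [//|x s IH] /= /andP[Hx Hs].
rewrite cat_uniq IH // andbT map_inj_uniq ?Ht //; last exact: rcons_injr.
apply/hasPn => z /allpairsPdep [x' [y' [Hx' _ ->]]].
apply/mapP => -[y _] /rcons_inj [E _].
by subst; rewrite Hx' in Hx.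
Qed.

Lemma P_uniq l : uniq (P l).
Proof.
elim: l => [//|l IH] /=; apply: uniq_rcons_pairs => // x; exact: nbrs_uniq.
Qed.

Lemma P_last_part l p : p \in P l -> partb (last [::] p).
Proof.
case: l => [|l]; first by rewrite mem_seq1 => /eqP ->.
case/allpairsPdep => q [v [_ Hv ->]]; rewrite last_rcons; exact: nbrs_part Hv.
Qed.

Lemma P_last_size l p : p \in P l -> sumn (last [::] p) <= l.
Proof.
elim: l p => [|l IH] p; first by rewrite mem_seq1 => /eqP ->.
case/allpairsPdep => q [v [Hq Hv ->]]; rewrite last_rcons.
have := IH _ Hq; move: Hv; rewrite mem_cat => /orP[/ups_size|/downs_size] => H1 H2.
  by rewrite H1 ltnS.
have H3 : sumn v < sumn (last [::] q) by rewrite H1.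
exact: leq_trans (ltnW H3) (leqW H2).
Qed.

Lemma sum_P l (G : seq (seq nat) -> nat) :
  \sum_(p <- P l.+1) G p = \sum_(p <- P l) \sum_(v <- nbrs (last [::] p)) G (rcons p v).
Proof. by rewrite /= big_allpairs_dep. Qed.

Lemma osc_iff lam l T : is_osc_tableau lam l T <->
  exists p, [/\ p \in P l, T = [::] :: p & last [::] p = lam].
Proof.
split.
- case=> Hs [H0 [Hl [Hpart Hcov]]].
  case: T Hs H0 Hl Hpart Hcov => [//|t0 p] /= [Hs] -> Hl Hpart Hcov.
  exists p; split => //; last by rewrite (last_nth [::]) Hs.
  rewrite mem_P Hs eqxx /=; apply/(pathP [::]) => i Hi.
  have Hpi : partb (nth [::] ([::] :: p) i).
    by apply/is_partitionP; apply: (Hpart i); rewrite /= ltnS ltnW.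
  have := Hcov i.+1; rewrite /= -Hs Hi => /(_ isT) H.
  by apply/(mem_nbrs _ Hpi); case: H; [left|right].
- case=> p [Hp -> Hl]; move: Hp; rewrite mem_P => /andP[/eqP Hs Hpath].
  have Hpart : forall i, i < size ([::] :: p) -> partb (nth [::] ([::] :: p) i).
    case=> [//|i] /= Hi.
    by have := (pathP [::] Hpath) i Hi; apply: nbrs_part.
  split; first by rewrite /= Hs.
  split; first by [].
  split; first by rewrite /= -Hl (last_nth [::]) Hs.
  split; first by move=> i Hi; apply/is_partitionP; apply: Hpart.
  move=> [//|i] /andP[_ Hi] /=.
  have Hpi : partb (nth [::] ([::] :: p) i) by apply: Hpart; rewrite /= ltnS Hs; exact: ltnW.
  have := (pathP [::] Hpath) i; rewrite Hs => /(_ Hi) H.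
  by have := proj1 (mem_nbrs _ Hpi) H.
Qed.

Definition cnt l (mu : seq nat) := \sum_(p <- P l | last [::] p == mu) 1.
Definition wsum l (mu : seq nat) := \sum_(p <- P l | last [::] p == mu) wt ([::] :: p).

Lemma sum_eq_uniq (s : seq (seq nat)) (mu : seq nat) (G : seq nat -> nat) :
  uniq s -> \sum_(v <- s | v == mu) G v = if mu \in s then G mu else 0.
Proof.
elim: s => [|x s IH]; first by rewrite big_nil.
rewrite /= => /andP[Hx Hs]; rewrite big_cons IH // in_cons.
case: (x =P mu) => [E|Ne] /=.
  by subst x; rewrite eqxx (negbTE Hx) addn0.
by rewrite (_ : (mu == x) = false) //; apply/eqP => E; apply: Ne.
Qed.

Lemma sum_split_mem (r : seq (seq (seq nat))) (s : seq (seq nat)) (g : seq (seq nat) -> seq nat)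
  (G : seq (seq nat) -> nat) : uniq s ->
  \sum_(p <- r | g p \in s) G p = \sum_(v <- s) \sum_(p <- r | g p == v) G p.
Proof.
move=> Hs.
rewrite (eq_bigr (fun v => \sum_(p <- r) (if g p == v then G p else 0))); last first.
  by move=> v _; rewrite big_mkcond.
rewrite exchange_big /= big_mkcond; apply: eq_bigr => p _.
rewrite -big_mkcond /=.
rewrite (eq_bigl (fun v => v == g p)); last by move=> v; rewrite eq_sym.
by rewrite sum_eq_uniq.
Qed.

Lemma rec_sum l mu (G : seq (seq nat) -> nat) : partb mu ->
  \sum_(p <- P l.+1 | last [::] p == mu) G p
  = \sum_(v <- nbrs mu) \sum_(p <- P l | last [::] p == v) G (rcons p mu).
Proof.
move=> Hmu; rewrite -sum_split_mem ?nbrs_uniq //.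
rewrite big_mkcond sum_P [RHS]big_mkcond big_seq [RHS]big_seq.
apply: eq_bigr => p Hp.
rewrite (eq_bigr (fun v => if v == mu then G (rcons p v) else 0)); last first.
  by move=> v _; rewrite last_rcons.
rewrite -big_mkcond sum_eq_uniq ?nbrs_uniq //.
by rewrite nbrs_sym // (P_last_part Hp).
Qed.

Lemma wt_rcons p mu : wt ([::] :: rcons p mu) = wt ([::] :: p) + psize mu.
Proof. by rewrite /wt -cats1 -cat_cons big_cat big_seq1. Qed.

Lemma cnt_rec l mu : partb mu ->
  cnt l.+1 mu = \sum_(v <- ups mu) cnt l v + \sum_(v <- downs mu) cnt l v.
Proof. by move=> Hmu; rewrite /cnt rec_sum // big_cat. Qed.

Lemma wsum_rec l mu : partb mu ->
  wsum l.+1 mu = \sum_(v <- ups mu) wsum l v + \sum_(v <- downs mu) wsum l v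
                 + sumn mu * cnt l.+1 mu.
Proof.
move=> Hmu; rewrite /wsum rec_sum //.
rewrite (eq_bigr (fun v => \sum_(p <- P l | last [::] p == v) wt ([::] :: p)
                         + \sum_(p <- P l | last [::] p == v) sumn mu)); last first.
  by move=> v _; rewrite -big_split /=; apply: eq_bigr => p _; rewrite wt_rcons.
rewrite big_split /= big_cat /=; congr addn.
rewrite /cnt rec_sum // big_distrr /=; apply: eq_bigr => v _.
by rewrite big_distrr /=; apply: eq_bigr => p _; rewrite muln1.
Qed.

Lemma cnt_zero l mu : l < sumn mu -> cnt l mu = 0 /\ wsum l mu = 0.
Proof.
move=> Hl; suff H : forall p, p \in P l -> last [::] p == mu = false.
  by rewrite /cnt /wsum; split; rewrite big_seq_cond big_pred0 // => p; case Hp: (p \in P l) => //=; exact: H.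
move=> p Hp; apply/negP => /eqP E; have := P_last_size Hp; rewrite E; lia.
Qed.

Fixpoint df n := if n is n'.+1 then (2 * n' + 1) * df n' else 1.
Definition alpha n h := 'C(h + 2 * n, h) * df n.
Definition Pp n h := 4 * n ^ 2 + 3 * h ^ 2 + 8 * h * n + 2 * n + 3 * h.

Lemma df_pos n : 0 < df n.
Proof. by elim: n => //= n IH; rewrite muln_gt0 IH addn1. Qed.

Lemma alpha_pos n h : 0 < alpha n h.
Proof. by rewrite /alpha muln_gt0 df_pos bin_gt0 leq_addr. Qed.

Lemma alpha0 h : alpha 0 h = 1.
Proof. by rewrite /alpha muln0 addn0 binn. Qed.

Lemma alpha_h0 n : alpha n.+1 0 = alpha n 1.
Proof. by rewrite /alpha bin0 /= bin1 mul1n; congr muln; lia. Qed.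

Lemma alpha_r1 n h : alpha n h * (h.+1 + 2 * n) = h.+1 * alpha n h.+1.
Proof.
rewrite /alpha.
have E := mul_bin_diag (h.+1 + 2 * n) h.
rewrite (_ : (h.+1 + 2 * n).-1 = h + 2 * n) in E; last by lia.
by rewrite mulnAC (mulnC 'C(h + 2 * n, h)) E addSn mulnA.
Qed.

Lemma alpha_r2 n h : h.+1 * alpha n h.+1 * (h + 2 * n.+1) = 2 * n.+1 * alpha n.+1 h.
Proof.
rewrite /alpha /=.
set N := h + 2 * n.+1.
have E1 : h.+1 + 2 * n = N.-1 by rewrite /N; lia.
have L1 := mul_bin_left N.-1 h.
have L2 := mul_bin_down N h.
rewrite E1.
have -> : h.+1 * ('C(N.-1, h.+1) * df n) * N = (h.+1 * 'C(N.-1, h.+1)) * N * df n by lia.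
rewrite L1 (_ : N.-1 - h = 2 * n + 1); last by rewrite /N; lia.
have -> : (2 * n + 1) * 'C(N.-1, h) * N * df n = (N * 'C(N.-1, h)) * ((2 * n + 1) * df n) by lia.
rewrite L2 (_ : N - h = 2 * n.+1); last by rewrite /N; lia.
lia.
Qed.

Definition Q l := forall mu n, partb mu -> l = sumn mu + 2 * n ->
  cnt l mu = f mu * alpha n (sumn mu) /\
  6 * wsum l mu = f mu * alpha n (sumn mu) * Pp n (sumn mu).

Lemma part_sum0 mu : partb mu -> sumn mu = 0 -> mu = [::].
Proof. by move=> Hm Hs; case: (eqVneq mu [::]) => // Hne; have := sumn_pos Hm Hne; lia. Qed.

Lemma sum_fc (s : seq (seq nat)) (c : nat) (g : seq nat -> nat) :
  (forall v, v \in s -> g v = f v * c) -> \sum_(v <- s) g v = (\sum_(v <- s) f v) * c.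
Proof. by move=> H; rewrite big_distrl /=; apply: eq_big_seq. Qed.

Lemma combine (F A X Y Pa Pb Pc N h2 h1 n2 : nat) : Y * N = h1 * A -> h2 * X * N = n2 * A ->
  n2 * Pa + h1 * Pb + 6 * h1 * N = N * Pc ->
  N * (h2 * F * X * Pa + F * Y * Pb + 6 * (h1 * (F * A))) = N * (F * A * Pc).
Proof.
move=> R1 R2 H.
have E1 : N * (h2 * F * X * Pa + F * Y * Pb + 6 * (h1 * (F * A)))
   = F * Pa * (h2 * X * N) + F * Pb * (Y * N) + F * A * (6 * h1 * N) by lia.
rewrite E1 R1 R2.
have E2 : F * A * (n2 * Pa + h1 * Pb + 6 * h1 * N) = F * A * (N * Pc) by rewrite H.
lia.
Qed.

Lemma combine_w (F A X Y Pa Pb Pc N h2 h1 n2 S1 S2 : nat) : Y * N = h1 * A -> h2 * X * N = n2 * A ->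
  n2 * Pa + h1 * Pb + 6 * h1 * N = N * Pc ->
  6 * S1 = h2 * F * X * Pa -> 6 * S2 = F * Y * Pb ->
  N * (6 * (S1 + S2 + h1 * (F * A))) = N * (F * A * Pc).
Proof.
move=> R1 R2 H E1 E2.
have -> : 6 * (S1 + S2 + h1 * (F * A)) = h2 * F * X * Pa + F * Y * Pb + 6 * (h1 * (F * A)) by lia.
exact: (@combine F A X Y Pa Pb Pc N h2 h1 n2 R1 R2 H).
Qed.

Lemma combine_c (F A X Y N h2 h1 n2 S1 S2 : nat) : Y * N = h1 * A -> h2 * X * N = n2 * A ->
  S1 = h2 * F * X -> S2 = F * Y -> N = h1 + n2 -> N * (S1 + S2) = N * (F * A).
Proof.
move=> R1 R2 E1 E2 EN.
have -> : N * (S1 + S2) = F * (h2 * X * N) + F * (Y * N) by rewrite E1 E2; lia.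
rewrite R1 R2 EN; lia.
Qed.

Lemma mainQ l : Q l.
Proof.
elim: l => [|l IH] mu n Hmu Hl.
  have Hs : sumn mu = 0 by lia.
  have Hn : n = 0 by lia.
  subst n; rewrite (part_sum0 Hmu Hs) /= alpha0 /cnt /wsum /=.
  by rewrite !big_cons !big_nil /= /wt big_cons big_nil.
move Eh: (sumn mu) => h.
have Hc := cnt_rec l Hmu; have Hw := wsum_rec l Hmu.
have Uz : n = 0 -> \sum_(v <- ups mu) cnt l v = 0 /\ \sum_(v <- ups mu) wsum l v = 0.
  move=> Hn; split; rewrite big1_seq // => v /andP[_ Hv];
    have [H1 H2] := cnt_zero (l := l) (mu := v) ltac:(rewrite (ups_size Hv); lia); by [].
have Un : forall n', n = n'.+1 ->
  \sum_(v <- ups mu) cnt l v = h.+1 * f mu * alpha n' h.+1 /\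
  6 * \sum_(v <- ups mu) wsum l v = h.+1 * f mu * alpha n' h.+1 * Pp n' h.+1.
  move=> n' Hn; split.
    rewrite (sum_fc (c := alpha n' h.+1)) ?f_ups ?Eh // => v Hv.
    have [H1 _] := IH v n' (ups_part Hv) ltac:(rewrite (ups_size Hv); lia).
    by rewrite H1 (ups_size Hv) Eh.
  rewrite big_distrr /= (sum_fc (c := alpha n' h.+1 * Pp n' h.+1)) ?f_ups ?Eh ?mulnA // => v Hv.
  have [_ H2] := IH v n' (ups_part Hv) ltac:(rewrite (ups_size Hv); lia).
  by rewrite H2 (ups_size Hv) Eh mulnA.
have Dz : h = 0 -> \sum_(v <- downs mu) cnt l v = 0 /\ \sum_(v <- downs mu) wsum l v = 0.
  by move=> H0; rewrite (part_sum0 Hmu (etrans Eh H0)) !big_nil.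
have Dn : forall h', h = h'.+1 ->
  \sum_(v <- downs mu) cnt l v = f mu * alpha n h' /\
  6 * \sum_(v <- downs mu) wsum l v = f mu * alpha n h' * Pp n h'.
  move=> h' Hh.
  have Hne : mu != [::] by apply/eqP => E; rewrite E in Eh; rewrite -Eh in Hh.
  have Hsz : forall v, v \in downs mu -> sumn v = h' by move=> v Hv; have := downs_size Hv; rewrite Eh Hh; case.
  split.
    rewrite (sum_fc (c := alpha n h')) -?f_downs // => v Hv.
    have [H1 _] := IH v n (downs_part Hv) ltac:(rewrite (Hsz _ Hv); lia).
    by rewrite H1 (Hsz _ Hv).
  rewrite big_distrr /= (sum_fc (c := alpha n h' * Pp n h')) -?f_downs ?mulnA // => v Hv.
  have [_ H2] := IH v n (downs_part Hv) ltac:(rewrite (Hsz _ Hv); lia).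
  by rewrite H2 (Hsz _ Hv) mulnA.
case: n Hl Uz Un Dn => [|n'] Hl Uz Un Dn.
- have [U1 U2] := Uz erefl; clear Un.
  case: h Eh Hl Dz Dn => [|h'] Eh Hl Dz Dn; first by lia.
  have [D1 D2] := Dn h' erefl.
  have Ec : cnt l.+1 mu = f mu by rewrite Hc U1 D1 alpha0; lia.
  split; first by rewrite Ec alpha0; lia.
  move: D2; rewrite Hw U2 Ec Eh !alpha0 /Pp; lia.
- have [U1 U2] := Un n' erefl; clear Un.
  case: h Eh Hl Dz Dn U1 U2 => [|h'] Eh Hl Dz Dn U1 U2.
  + have [D1 D2] := Dz erefl.
    have Ec : cnt l.+1 mu = f mu * alpha n' 1 by rewrite Hc U1 D1; lia.
    split; first by rewrite Ec alpha_h0.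
    move: U2; rewrite Hw D2 Ec Eh alpha_h0 /Pp; lia.
  + have [D1 D2] := Dn h' erefl.
    have R1 := alpha_r1 n'.+1 h'.
    have R2 := alpha_r2 n' h'.+1.
    have HN : 0 < h'.+1 + 2 * n'.+1 by [].
    have Ec : cnt l.+1 mu = f mu * alpha n'.+1 h'.+1.
      rewrite Hc; apply/eqP; rewrite -(eqn_pmul2l HN); apply/eqP.
      apply: (combine_c R1 R2 U1 D1); lia.
    split => //.
    rewrite Hw Ec Eh; apply/eqP; rewrite -(eqn_pmul2l HN); apply/eqP.
    apply: (combine_w R1 R2 _ U2 D2).
    rewrite /Pp; lia.
Qed.

Lemma perm_s lam k n (s : seq (seq (seq nat))) :
  uniq s -> (forall T, T \in s <-> is_osc_tableau lam (k + 2 * n) T) ->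
  perm_eq s [seq [::] :: p | p <- [seq p <- P (k + 2 * n) | last [::] p == lam]].
Proof.
move=> Hu Hm; apply: uniq_perm => //.
  rewrite map_inj_uniq ?filter_uniq ?P_uniq //; by move=> x y [].
move=> T; apply/idP/idP.
- move/Hm/osc_iff => [p [Hp -> Hl]].
  by apply/mapP; exists p => //; rewrite mem_filter Hl eqxx.
- case/mapP => p; rewrite mem_filter => /andP[/eqP Hl Hp] ->.
  by apply/Hm/osc_iff; exists p.
Qed.

Lemma main_nat lam k n (s : seq (seq (seq nat))) :
  is_partition lam -> psize lam = k ->
  uniq s -> (forall T, T \in s <-> is_osc_tableau lam (k + 2 * n) T) ->
  0 < size s /\ 6 * (\sum_(T <- s) wt T) = size s * (4 * n ^ 2 + 3 * k ^ 2 + 8 * k * n + 2 * n + 3 * k).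
Proof.
move=> /is_partitionP Hlam Hk Hu Hm.
have Hp := perm_s Hu Hm.
have Hsz : size s = cnt (k + 2 * n) lam.
  by rewrite (perm_size Hp) size_map size_filter /cnt sum1_count.
have Hsum : \sum_(T <- s) wt T = wsum (k + 2 * n) lam.
  by rewrite (perm_big _ Hp) big_map big_filter.
have [Hc Hw] := mainQ Hlam (n := n) (esym (congr1 (addn^~ _) Hk)).
have Hk' : sumn lam = k := Hk.
rewrite Hk' in Hc Hw.
rewrite Hsz Hsum Hw Hc; split; first by rewrite muln_gt0 f_pos ?alpha_pos.
by [].
Qed.
End Helpers.

Theorem theorem2 (lam : seq nat) (k n : nat) (s : seq (seq (seq nat))) :
  is_partition lam -> psize lam = k ->
  uniq s -> (forall T, T \in s <-> is_osc_tableau lam (k + 2 * n) T) ->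
  (\sum_(T <- s) wt T)%:R / (size s)%:R
    = (4 * n ^ 2 + 3 * k ^ 2 + 8 * k * n + 2 * n + 3 * k)%:R / 6 :> rat.
Proof.
move=> Hl Hk Hu Hm.
have [Hpos Heq] := main_nat Hl Hk Hu Hm.
apply/eqP; rewrite eqr_div ?pnatr_eq0 -?lt0n //.
rewrite -!natrM; apply/eqP; congr (_%:R).
by rewrite mulnC Heq mulnC.
Qed.
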